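(* Let $n$ be a positive integer and let $\log n/n \ll p = p(n) \le 1$. Let $\varepsilon > 0$ be an (arbitrarily small) constant, let $c > 0$ be a constant, and let $D = (V,E) \in \mathcal{D}(n,p)$. For a set $Y \subseteq V$, let $B_Y$ denote the set of all vertices $u \in V \setminus Y$ for which $|\deg^+_D(u,Y) - |Y|p| \ge \varepsilon |Y| p$ or $|\deg^-_D(u,Y) - |Y|p| \ge \varepsilon |Y| p$. Let $b = \max\{|B_Y| : Y \subseteq V,\ |Y| \ge cn\}$. Then a.a.s. $b \le p^{-1}\log n$.
   Context: $\mathcal{D}(n,p)$ is the random digraph on $[n]$ where each ordered pair $(u,v)$, $u\ne v$, is an arc independently with probability $p$. $\deg^+_D(u,Y)$ is the number of $y \in Y$ with $(u,y)$ an arc, $\deg^-_D(u,Y)$ the number of $y\in Y$ with $(y,u)$ an arc. a.a.s. means with probability tending to $1$ as $n\to\infty$; $f \ll g$ means $f/g \to 0$; $\log$ is natural. *)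

(* Defs.v *)
From HB Require Import structures.
From mathcomp Require Import all_boot all_order all_algebra.
From mathcomp Require Import all_classical all_reals all_analysis.
Set Implicit Arguments. Unset Strict Implicit. Unset Printing Implicit Defensive.
Import Order.TTheory GRing.Theory Num.Theory.
Local Open Scope ring_scope.

Definition digraph (n : nat) := {set 'I_n * 'I_n}.

(* Probability of the digraph D in D(n,p): loops have probability 0,
   each ordered pair (u,v), u <> v, is an arc independently with prob. p. *)
Definition Dnp_weight {R : realType} (n : nat) (p : R) (D : digraph n) : R :=
  if [forall i : 'I_n, (i, i) \notin D] then
    \prod_(a : 'I_n * 'I_n | a.1 != a.2) (if a \in D then p else 1 - p)
  else 0.

Definition Dnp_prob {R : realType} (n : nat) (p : R) (E : pred (digraph n)) : R :=
  \sum_(D : digraph n | E D) Dnp_weight p D.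

Definition outdeg (n : nat) (D : digraph n) (u : 'I_n) (Y : {set 'I_n}) : nat :=
  #|[set y in Y | (u, y) \in D]|.
Definition indeg (n : nat) (D : digraph n) (u : 'I_n) (Y : {set 'I_n}) : nat :=
  #|[set y in Y | (y, u) \in D]|.

Definition badset {R : realType} (n : nat) (eps p : R) (D : digraph n)
    (Y : {set 'I_n}) : {set 'I_n} :=
  [set u in ~: Y |
     (eps * #|Y|%:R * p <= `|(outdeg D u Y)%:R - #|Y|%:R * p|)
  || (eps * #|Y|%:R * p <= `|(indeg D u Y)%:R - #|Y|%:R * p|)].

(* b = max { |B_Y| : Y subset V, |Y| >= c n }  (0 if no such Y). *)
Definition bmax {R : realType} (n : nat) (eps c p : R) (D : digraph n) : nat :=
  \max_(Y : {set 'I_n} | c * n%:R <= #|Y|%:R) #|badset eps p D Y|.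

(* Main.v *)
Require Import Defs.
From HB Require Import structures.
From mathcomp Require Import all_boot all_order all_algebra.
From mathcomp Require Import all_classical all_reals all_analysis.
From mathcomp Require Import ring lra.
Import Order.TTheory GRing.Theory Num.Theory.
Local Open Scope ring_scope.
Set Implicit Arguments. Unset Strict Implicit. Unset Printing Implicit Defensive.

Section Core.
Variable R : realType.

Definition wt (q : R) n (a : 'I_n * 'I_n) (b : bool) : R :=
  if a.1 == a.2 then (if b then 0 else 1) else (if b then q else 1 - q).

Lemma weight_prod n q (D : digraph n) : Dnp_weight q D = \prod_a wt q a (a \in D).
Proof.
rewrite /Dnp_weight; case: ifP => [/forallP noloop|/negbT].
  rewrite [RHS](bigID (fun a : 'I_n * 'I_n => a.1 != a.2)) /=.
  rewrite [X in _ * X]big1 ?mulr1; last first.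
    case=> i j /=; rewrite negbK => /eqP eij; subst j.
    by rewrite /wt /= eqxx (negbTE (noloop i)).
  by apply: eq_bigr => a /negbTE; rewrite /wt => ->.
rewrite negb_forall => /existsP [i]; rewrite negbK => iiD.
rewrite (bigD1 (i, i)) //= /wt /= eqxx iiD mul0r //.
Qed.

Lemma sum_set_prod n (W : 'I_n * 'I_n -> bool -> R) :
  \sum_(D : digraph n) \prod_a W a (a \in D) = \prod_a (W a true + W a false).
Proof.
have -> : \prod_a (W a true + W a false) = \prod_a \sum_(b : bool) W a b.
  by apply: eq_bigr => a _; rewrite big_bool.

rewrite bigA_distr_bigA /=.
rewrite (reindex (fun f : {ffun 'I_n * 'I_n -> bool} => [set a | f a])) /=.
  by apply: eq_bigr => f _; apply: eq_bigr => a _; rewrite inE.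
exists (fun D : digraph n => [ffun a => a \in D]) => [f _|D _].
  by apply/ffunP => a; rewrite ffunE inE.
by apply/setP => a; rewrite inE ffunE.
Qed.


Lemma expect_prod n q (G : 'I_n * 'I_n -> bool -> R) :
  \sum_(D : digraph n) Dnp_weight q D * \prod_a G a (a \in D) =
  \prod_a (wt q a true * G a true + wt q a false * G a false).
Proof.
rewrite -(sum_set_prod (fun a b => wt q a b * G a b)); apply: eq_bigr => D _.
by rewrite weight_prod -big_split.
Qed.

Lemma mass1 n (q : R) : \sum_(D : digraph n) Dnp_weight q D = 1.
Proof.
under eq_bigr do rewrite weight_prod.
rewrite sum_set_prod big1 // => a _; rewrite /wt.
by case: ifP => _; rewrite ?add0r // addrC subrK.
Qed.

Lemma wt_ge0 n q (a : 'I_n * 'I_n) b : 0 <= q <= 1 -> 0 <= wt q a b.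
Proof.
move=> /andP[q0 q1]; rewrite /wt.
by case: ifP; case: b => //; rewrite subr_ge0.
Qed.

Lemma weight_ge0 n (q : R) (D : digraph n) : 0 <= q <= 1 -> 0 <= Dnp_weight q D.
Proof. by move=> hq; rewrite weight_prod; apply: prodr_ge0 => a _; apply: wt_ge0. Qed.

Lemma prob_compl n (q : R) (E : pred (digraph n)) :
  Dnp_prob q E = 1 - Dnp_prob q (predC E).
Proof.
rewrite -(mass1 n q) /Dnp_prob [in RHS](bigID E) /=.
by rewrite [X in _ - X](eq_bigl (fun D => ~~ E D)) // addrK.
Qed.

Definition flip n (dir : bool) (a : 'I_n * 'I_n) := if dir then a else (a.2, a.1).
Definition degd n dir (D : digraph n) (u : 'I_n) (Y : {set 'I_n}) : nat :=
  #|[set y in Y | flip dir (u, y) \in D]|.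

Lemma flipK n dir : involutive (@flip n dir).
Proof. by case: dir => // -[]. Qed.

Lemma Zform n dir (D : digraph n) (B Y : {set 'I_n}) (l : R) :
  expR (l * (\sum_(u in B) degd dir D u Y)%:R) =
  \prod_z (if (z \in finset.setX B Y) && (flip dir z \in D) then expR l else 1).
Proof.
rewrite natr_sum mulr_sumr expR_sum.
transitivity (\prod_u \prod_y (if ((u, y) \in finset.setX B Y) && (flip dir (u,y) \in D) then expR l else 1)); last first.
  by rewrite pair_bigA; apply: eq_bigr => -[].
rewrite [RHS](bigID (fun u => u \in B)) /= [X in _ * X]big1 ?mulr1; last first.
  by move=> u /negbTE uB; apply: big1 => y _; rewrite finset.in_setX uB.
apply: eq_bigr => u uB.
rewrite expRM_natr -prodr_const big_mkcond /=.
apply: eq_bigr => y _; rewrite !inE uB /=.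
by case: (y \in Y).
Qed.


Lemma mgf n (q x : R) dir (B Y : {set 'I_n}) : 0 <= q <= 1 -> 0 < x ->
  (forall u, u \in B -> u \notin Y) ->
  \sum_(D : digraph n) Dnp_weight q D *
     \prod_z (if (z \in finset.setX B Y) && (flip dir z \in D) then x else 1)
  <= expR (q * (x - 1) * (#|B| * #|Y|)%:R).
Proof.
move=> hq x0 hBY.
set F := fun z (b : bool) => if (z \in finset.setX B Y) && b then x else 1.
have hF : forall D : digraph n,
    \prod_z (if (z \in finset.setX B Y) && (flip dir z \in D) then x else 1)
    = \prod_a F (flip dir a) (a \in D).
  move=> D; rewrite [RHS](reindex_inj (inv_inj (@flipK n dir))) /=.
  by apply: eq_bigr => a _; rewrite flipK.
under eq_bigr do rewrite hF.
rewrite (expect_prod q (fun a => F (flip dir a))) /=.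
have -> : (#|B| * #|Y|)%N = \sum_a (flip dir a \in finset.setX B Y : nat).
  rewrite -cardsX -sum1_card big_mkcond /=.
  rewrite [RHS](reindex_inj (inv_inj (@flipK n dir))) /=.
  by apply: eq_bigr => a _; rewrite flipK.
rewrite natr_sum mulr_sumr expR_sum.
apply: ler_prod => a _.
have hq' := hq; move: hq' => /andP[q0 q1].
rewrite /F /wt !andbF !mulr1.
case: ifP => [/eqP ea|na].
  have -> : (flip dir a \in finset.setX B Y) = false.
    clear hF; case: a ea => i j /= ->; case: dir => /=; rewrite finset.in_setX /=;
      by case iB: (j \in B) => //=; rewrite (negbTE (hBY _ iB)).
  by rewrite andbT mul0r add0r ler01 mulr0 expR0 lexx.
rewrite andbT; case: (flip dir a \in finset.setX B Y) => /=.
  rewrite mulr1; apply/andP; split.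
    by rewrite addr_ge0 ?mulr_ge0 ?subr_ge0 // ltW.
  have -> : q * x + (1 - q) = 1 + q * (x - 1) by ring.
  exact: expR_ge1Dx.
by rewrite mulr1 mulr0 expR0 addrC subrK lexx andbT.
Qed.


Lemma expR_le_quad (t : R) : t <= 1/2 -> expR t <= 1 + t + 2 * t ^+ 2.
Proof.
move=> ht.
have h1 : expR t * (1 - t) <= 1.
  rewrite -[X in _ <= X](expRxMexpNx_1 t) ler_wpM2l ?expR_ge0 //.
  exact: expR_ge1Dx.
have h2 : 0 < 1 - t by lra.
have h3 : 0 <= t ^+ 2 * (1 - 2 * t) by rewrite mulr_ge0 ?sqr_ge0 //; lra.
have h4 : expR t * (1 - t) <= (1 + t + 2 * t ^+ 2) * (1 - t).
  apply: (le_trans h1).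
  have -> : (1 + t + 2 * t ^+ 2) * (1 - t) = 1 + t ^+ 2 * (1 - 2 * t) by ring.
  by rewrite lerDl.
by rewrite ler_pM2r in h4.
Qed.

Definition sgr (b : bool) : R := if b then 1 else -1.

Lemma tail n (q s e : R) dir (sg : bool) (Y B : {set 'I_n}) :
  0 <= q <= 1 -> 0 < s -> s <= 1/4 -> 4 * s <= e ->
  (forall u, u \in B -> u \notin Y) ->
  \sum_(D : digraph n | [forall u in B, e * #|Y|%:R * q <=
       sgr sg * ((degd dir D u Y)%:R - #|Y|%:R * q)]) Dnp_weight q D
  <= expR (- (2 * s ^+ 2) * (#|B|%:R * #|Y|%:R * q)).
Proof.
move=> hq s0 s14 hse hBY.
have hq' := hq; move: hq' => /andP[q0 q1].
set m : R := #|Y|%:R; set b : R := #|B|%:R.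
have sg2 : sgr sg ^+ 2 = 1 by case: sg; rewrite /sgr ?expr1n ?sqrrN ?expr1n.
have lle : sgr sg * s <= s by clear sg2; case: sg; rewrite /sgr ?mul1r ?mulN1r //; lra.
set l := sgr sg * s.
set K := expR (- (l * (b * m * q) + s * e * (b * m * q))).
set X := fun D : digraph n => (\sum_(u in B) degd dir D u Y)%N.
have step1 : forall D : digraph n,
   [forall u in B, e * m * q <= sgr sg * ((degd dir D u Y)%:R - m * q)] ->
   1 <= expR (l * (X D)%:R) * K.
  move=> D /forall_inP H.
  have H1 : \sum_(u in B) e * m * q <=
      \sum_(u in B) sgr sg * ((degd dir D u Y)%:R - m * q) by apply: ler_sum.
  rewrite sumr_const -mulr_sumr sumrB sumr_const -natr_sum in H1.
  rewrite -[e * m * q *+ #|B|]mulr_natr -[m * q *+ #|B|]mulr_natr -/b in H1.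
  rewrite /K -expRD -[X in X <= _]expR0 ler_expR /l.
  have H2 := ler_wpM2l (ltW s0) H1.
  set Xr := (X D)%:R in H2 *.
  have -> : sgr sg * s * Xr + - (sgr sg * s * (b * m * q) + s * e * (b * m * q))
     = s * (sgr sg * (Xr - m * q * b)) - s * (e * m * q * b) by ring.
  by rewrite subr_ge0.
apply: (@le_trans _ _ (\sum_(D : digraph n) Dnp_weight q D * (expR (l * (X D)%:R) * K))).
  rewrite big_mkcond /=; apply: ler_sum => D _.
  case: ifP => hc.
    by rewrite -[X in X <= _]mulr1 ler_wpM2l ?weight_ge0 ?step1.
  by rewrite mulr_ge0 ?weight_ge0 ?mulr_ge0 ?expR_ge0.
under eq_bigr do rewrite mulrA.
rewrite -mulr_suml.
under eq_bigr do rewrite Zform.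
apply: le_trans.
  apply: ler_wpM2r; first exact: expR_ge0.
  by apply: mgf => //; exact: expR_gt0.
rewrite -expRD ler_expR natrM -/b -/m.
have hl : expR l - 1 <= l + 2 * s ^+ 2.
  have := expR_le_quad (t := l).
  have -> : l ^+ 2 = s ^+ 2 by rewrite /l exprMn sg2 mul1r.
  move=> H; have : l <= 1/2 by apply: (le_trans lle); apply: (le_trans s14); lra.
  move=> /H; lra.
have hP : 0 <= b * m * q by rewrite mulr_ge0 ?mulr_ge0 ?ler0n.
have hs2 : 4 * s ^+ 2 <= s * e.
  by rewrite expr2 mulrCA; apply: ler_wpM2l => //; exact: ltW.
set P := b * m * q.
have -> : q * (expR l - 1) * (b * m) - (l * P + s * e * P)
   = P * (expR l - 1) - P * l - P * (s * e) by rewrite /P; ring.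
have -> : - (2 * s ^+ 2) * P = P * (l + 2 * s ^+ 2) - P * l - P * (4 * s ^+ 2) by ring.
apply: lerB; last by apply: ler_wpM2l.
by apply: lerB => //; apply: ler_wpM2l.
Qed.




Lemma bmax_le n (eps c q L : R) (D : digraph n) : 0 <= L ->
  (forall Y : {set 'I_n}, c * n%:R <= #|Y|%:R -> #|badset eps q D Y|%:R <= L) ->
  (bmax eps c q D)%:R <= L.
Proof.
move=> L0 H; rewrite /bmax.
apply: (big_ind (fun x : nat => x%:R <= L)) => //.
by move=> x y hx hy; rewrite /maxn; case: ifP.
Qed.

Definition Sset n (eps q : R) (D : digraph n) (Y : {set 'I_n}) dir sg : {set 'I_n} :=
  [set u in ~: Y | eps * #|Y|%:R * q <= sgr sg * ((degd dir D u Y)%:R - #|Y|%:R * q)].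

Lemma badset_sub n (eps q : R) (D : digraph n) (Y : {set 'I_n}) :
  (#|badset eps q D Y| <= #|Sset eps q D Y true true| + #|Sset eps q D Y true false|
     + #|Sset eps q D Y false true| + #|Sset eps q D Y false false|)%N.
Proof.
apply: (leq_trans (subset_leq_card (_ : badset eps q D Y \subset
   Sset eps q D Y true true :|: Sset eps q D Y true false :|:
   Sset eps q D Y false true :|: Sset eps q D Y false false))).
  apply/fintype.subsetP => u; rewrite !inE => /andP[uY].
  rewrite uY /= /sgr !mul1r !mulN1r.
  rewrite !ler_normr.
  have -> : outdeg D u Y = degd true D u Y by [].
  have -> : indeg D u Y = degd false D u Y by [].
  by case/orP => /orP[] ->; rewrite ?orbT.
apply: (leq_trans (leq_card_setU _ _)); rewrite leq_add2r.
apply: (leq_trans (leq_card_setU _ _)); rewrite leq_add2r.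
exact: leq_card_setU.
Qed.

Lemma union_bound n (q : R) (I : finType) (E : pred (digraph n))
    (F : I -> pred (digraph n)) : 0 <= q <= 1 ->
  (forall D, E D -> exists i, F i D) -> Dnp_prob q E <= \sum_i Dnp_prob q (F i).
Proof.
move=> hq H; rewrite /Dnp_prob.
under [X in _ <= X]eq_bigr do rewrite big_mkcond.
rewrite exchange_big /= big_mkcond; apply: ler_sum => D _.
case: ifP => ED.
  have [i Fi] := H D ED.
  rewrite (bigD1 i) //= Fi lerDl; apply: sumr_ge0 => j _.
  by case: ifP => // _; apply: weight_ge0.
by apply: sumr_ge0 => j _; case: ifP => // _; apply: weight_ge0.
Qed.


Lemma exists_S n (eps q L : R) (D : digraph n) (Y : {set 'I_n}) :
  L < #|badset eps q D Y|%:R ->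
  exists dir, exists sg, L < 4 * #|Sset eps q D Y dir sg|%:R.
Proof.
move=> H; have hb := badset_sub eps q D Y.
case: (leP (4 * #|Sset eps q D Y true true|%:R) L) => [h1|]; last by exists true, true.
case: (leP (4 * #|Sset eps q D Y true false|%:R) L) => [h2|]; last by exists true, false.
case: (leP (4 * #|Sset eps q D Y false true|%:R) L) => [h3|]; last by exists false, true.
case: (leP (4 * #|Sset eps q D Y false false|%:R) L) => [h4|]; last by exists false, false.
exfalso; move: hb; rewrite -(ler_nat R) !natrD => hb.
lra.
Qed.

Lemma bad_bound n (q eps c s : R) : 0 < q <= 1 -> 0 < s -> s <= 1/4 ->
  4 * s <= eps -> 0 < c -> (0 < n)%N ->
  Dnp_prob q (predC (fun D : digraph n => (bmax eps c q D)%:R <= q^-1 * ln n%:R))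
  <= #|{: {set 'I_n} * bool * bool * {set 'I_n}}|%:R *
     expR (- (2 * s ^+ 2) * (ln n%:R / 4 * (c * n%:R))).
Proof.
move=> /andP[q0 q1] s0 s14 hse c0 n0.
have hq : 0 <= q <= 1 by rewrite ltW.
set L := q^-1 * ln n%:R.
have L0 : 0 <= L.
  apply: mulr_ge0; first by rewrite invr_ge0 ltW.
  by apply: ln_ge0; rewrite ler1n.
pose F := fun (i : {set 'I_n} * bool * bool * {set 'I_n}) (D : digraph n) =>
  [&& c * n%:R <= #|i.1.1.1|%:R, L < 4 * #|i.2|%:R,
      [forall u in i.2, u \notin i.1.1.1] &
      [forall u in i.2, eps * #|i.1.1.1|%:R * q <=
          sgr i.1.2 * ((degd i.1.1.2 D u i.1.1.1)%:R - #|i.1.1.1|%:R * q)]].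
apply: le_trans (union_bound (F := F) hq _) _.
  move=> D /= bad.
  have /existsP [Y /andP[hY1 hY2]] : [exists Y : {set 'I_n},
      (c * n%:R <= #|Y|%:R) && (L < #|badset eps q D Y|%:R)].
    apply: contraNT bad => /existsPn H.
    apply: bmax_le => // Y hY; have := H Y; rewrite hY /= -leNgt; exact.
  have [dir [sg hS]] := exists_S hY2.
  exists (Y, dir, sg, Sset eps q D Y dir sg); rewrite /F /= hY1 hS /=.
  by apply/andP; split; apply/forall_inP => u; rewrite !inE => /andP[].
have Bd0 : 0 <= expR (- (2 * s ^+ 2) * (ln n%:R / 4 * (c * n%:R))) by exact: expR_ge0.
rewrite mulr_natl -sumr_const; apply: ler_sum => -[[[Y dir] sg] B] _.
rewrite /Dnp_prob /F /=.
case: (boolP (c * n%:R <= #|Y|%:R)) => hY; last by rewrite big_pred0.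
case: (boolP (L < 4 * #|B|%:R)) => hB; last by rewrite big_pred0.
case: (boolP [forall u in B, u \notin Y]) => hBY; last by rewrite big_pred0.
rewrite /=.
apply: le_trans (@tail n q s eps dir sg Y B hq s0 s14 hse _) _.
  by apply/forall_inP.
rewrite ler_expR !mulNr lerN2; apply: ler_wpM2l; first by rewrite mulr_ge0 ?sqr_ge0.
have -> : ln n%:R / 4 * (c * n%:R) = (L / 4) * (c * n%:R) * q.
  by rewrite /L; field; rewrite gt_eqF.
apply: ler_wpM2r; first exact: ltW.
apply: ler_pM => //.
- by rewrite divr_ge0.
- by rewrite mulr_ge0 ?ler0n // ltW.
- lra.
Qed.


Lemma bound_small (s c e : R) : 0 < s -> 0 < c -> 0 < e ->
  exists N, forall n, (N <= n)%N ->
  (2 ^ n * 2 * 2 * 2 ^ n)%:R * expR (- (2 * s ^+ 2) * (ln n%:R / 4 * (c * n%:R))) < e.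
Proof.
move=> s0 c0 e0.
set A := s ^+ 2 * c.
have A0 : 0 < A by rewrite mulr_gt0 ?exprn_gt0.
exists (maxn (Num.trunc (expR (A^-1 * 6))).+1 (Num.trunc (e^-1 * 4)).+1) => n.
rewrite geq_max => /andP[hN1 hN2].
have hn1 : expR (A^-1 * 6) < n%:R.
  by apply: lt_le_trans (truncnS_gt _) _; rewrite ler_nat.
have hn2 : e^-1 * 4 < n%:R.
  by apply: lt_le_trans (truncnS_gt _) _; rewrite ler_nat.
have n0 : 0 < n%:R :> R by apply: lt_trans hn1; exact: expR_gt0.
have hln : A^-1 * 6 <= ln n%:R.
  rewrite -[X in X <= _]expRK ler_ln ?posrE ?expR_gt0 //; exact: ltW.
rewrite ler_pdivrMl // in hln.
have he4 : 4 < e * n%:R by rewrite -ltr_pdivrMl.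
pose E : R := expR n%:R.
have hE : 1 + n%:R <= E := expR_ge1Dx _.
have h2 : (2%:R : R) ^+ n <= E.
  rewrite /E -[n%:R]mulr1 expRM_natl.
  apply: lerXn2r; rewrite ?nnegrE ?ler0n ?expR_ge0 //.
  have := expR_ge1Dx (1 : R); lra.
have hcard : (2 ^ n * 2 * 2 * 2 ^ n)%:R <= 4 * (E * E) :> R.
  rewrite !natrM natrX.
  have hX : 2%:R ^+ n * 2%:R ^+ n <= E * E :> R.
    by apply: ler_pM => //; rewrite exprn_ge0 ?ler0n.
  lra.
have hexp : E * E * expR (- (2 * s ^+ 2) * (ln n%:R / 4 * (c * n%:R))) <= E^-1.
  rewrite /E -!expRD -expRN ler_expR.
  have -> : - (2 * s ^+ 2) * (ln n%:R / 4 * (c * n%:R)) = - ((A * ln n%:R) * n%:R / 2).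
    by rewrite /A; field.
  have h3 : 6 * n%:R <= (A * ln n%:R) * n%:R by apply: ler_wpM2r => //; exact: ltW.
  set W := A * ln n%:R * n%:R in h3 *.
  lra.
have E0 : 0 < E by exact: expR_gt0.
apply: le_lt_trans (_ : _ <= 4 * E^-1) _.
  apply: le_trans (_ : _ <= 4 * (E * E) * expR (- (2 * s ^+ 2) * (ln n%:R / 4 * (c * n%:R)))) _.
    by apply: ler_wpM2r => //; exact: expR_ge0.
  by rewrite -mulrA; apply: ler_wpM2l.
rewrite mulrC ltr_pdivrMl //.
have : n%:R * e <= E * e by apply: ler_wpM2r; [exact: ltW | lra].
lra.
Qed.


End Core.

Lemma card_setn n : #|{: {set 'I_n}}| = (2 ^ n)%N.
Proof. by rewrite -cardsT -powersetT card_powerset cardsT card_ord. Qed.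

Lemma card_I n : #|{: {set 'I_n} * bool * bool * {set 'I_n}}| = (2 ^ n * 2 * 2 * 2 ^ n)%N.
Proof. by rewrite !card_prod card_bool card_setn. Qed.

Local Open Scope classical_set_scope.
Unset Implicit Arguments.
Theorem lemma4p1 (R : realType) (p : nat -> R) (eps c : R)
  (hp01 : forall n, 0 <= p n <= 1)
  (hp : forall e : R, 0 < e ->
          \forall n \near \oo, ln (n%:R) / n%:R <= e * p n)
  (heps : 0 < eps) (hc : 0 < c) :
  (fun n : nat =>
     Dnp_prob (p n) (fun D : digraph n =>
        (bmax eps c (p n) D)%:R <= (p n)^-1 * ln (n%:R)))
    @ \oo --> (1%R : R^o).
Proof.
set s := Num.min eps 1 / 4.
have m0 : 0 < Num.min eps 1 by rewrite lt_min heps ltr01.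
have s0 : 0 < s by rewrite /s divr_gt0.
have s14 : s <= 1/4 by rewrite /s ler_pM2r // ge_min lexx orbT.
have hse : 4 * s <= eps by rewrite /s mulrC divfK // ge_min lexx.
apply/cvgrPdist_lt => e e0.
have [N HN] := bound_small s0 hc e0.
have [N0 _ HN0] := hp 1 ltr01.
exists (maxn (maxn N N0) 2) => // n /=.
rewrite !geq_max => /andP[/andP[hN hN0] hn2].
have hq := hp01 n.
have n1 : 1 < n%:R :> R by rewrite ltr1n.
have pn : 0 < p n.
  have := HN0 n hN0; rewrite mul1r; apply: lt_le_trans.
  by rewrite divr_gt0 ?ln_gt0 //; apply: lt_trans n1.
rewrite prob_compl.
set X := Dnp_prob _ (predC _).
have -> : 1 - (1 - X) = X by ring.
have X0 : 0 <= X by apply: sumr_ge0 => D _; apply: weight_ge0.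
rewrite ger0_norm //.
apply: le_lt_trans (HN n hN).
rewrite -card_I.
apply: bad_bound => //.
- by move: hq => /andP[_ ->]; rewrite pn.
- by apply: leq_trans hn2.
Qed.
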